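(* Let $m,n,d,n_0$ be positive integers, $R>0$, $\mathbb{S}^d:=[-R,R]^d$, $x\in\mathbb{R}^{m\times n}$, and let $G:\mathbb{R}^d\to\mathbb{R}^{m\times n}$ be continuous. Assume there exists $z^*\in\mathbb{S}^d$ with $\|x-G(z^* )\|_0\le n_0$. For $\lambda>0$ consider $$(\mathrm{P}_\lambda):\quad \min_{z\in\mathbb{S}^d,\ M\in\mathbb{R}^{m\times n}} \|(\mathbf{1}-M)\odot x-(\mathbf{1}-M)\odot G(z)\|_2^2+\lambda\|M\|_1 ,$$ and let $\hat M(\lambda)$ be any optimal $M$-component of a solution of $(\mathrm{P}_\lambda)$. Let $\tilde n=\min_{z\in\mathbb{S}^d}\|x-G(z)\|_0$, $\tilde{\mathcal{Z}}=\{z\in\mathbb{S}^d:\|x-G(z)\|_0=\tilde n\}$, and $\tilde{\mathcal{M}}:=\{I_{x-G(\tilde z)}:\tilde z\in\tilde{\mathcal{Z}}\}$, so that $\tilde{\mathcal M}\subseteq\{M\in\{0,1\}^{m\times n}:\|M\|_0\le\tilde n\}$. Then $d_\infty(\hat M(\lambda),\tilde{\mathcal{M}})\downarrow 0$ as $\lambda\downarrow 0$. Moreover, there is a finite $\tilde\lambda>0$ such that for every $\lambda\le\tilde\lambda$ there exists $\tilde M\in\tilde{\mathcal{M}}$ with $\tilde M=I_{\hat M(\lambda)}$. If in addition $\tilde{\mathcal{Z}}=\{z^*\}$, then, with $M^*:=I_{x-G(z^* )}$, (i) $\hat M(\lambda)\to M^*$ as $\lambda\downarrow 0$, and (ii)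 $I_{\hat M(\lambda)}=M^*$ for every $\lambda\le\tilde\lambda$.
   Context: For a matrix $T$, $\|T\|_0$ is the number of nonzero entries, and $\|T\|_1,\|T\|_2,\|T\|_\infty$ are computed by treating $T$ as a vector. $I_T$ denotes the nonzero mask of $T$: $(I_T)_{ij}=0$ if $T_{ij}=0$ and $1$ otherwise. $\mathbf{1}$ is the all-ones $m\times n$ matrix and $\odot$ is the entrywise product. For a point $a$ and a set $B$, $d_\infty(a,B):=\inf_{b\in B}\|a-b\|_\infty$. *)

(* Defs.v *)
From HB Require Import structures.
From mathcomp Require Import all_boot all_order all_algebra.
From mathcomp Require Import all_classical all_reals all_analysis.
Set Implicit Arguments. Unset Strict Implicit. Unset Printing Implicit Defensive.
Import Order.TTheory GRing.Theory Num.Theory.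
Import numFieldNormedType.Exports.
Local Open Scope classical_set_scope.
Local Open Scope ring_scope.

Section MatrixNorms.
Variables (R : realType) (m n : nat).

Definition l0 (T : 'M[R]_(m, n)) : nat := #|[set ij : 'I_m * 'I_n | T ij.1 ij.2 != 0]|.
Definition l1 (T : 'M[R]_(m, n)) : R := \sum_(i < m) \sum_(j < n) `|T i j|.
Definition l2sq (T : 'M[R]_(m, n)) : R := \sum_(i < m) \sum_(j < n) (T i j) ^+ 2.
Definition linf (T : 'M[R]_(m, n)) : R := \big[Num.max/0]_(i < m) \big[Num.max/0]_(j < n) `|T i j|.
Definition hadamard (A B : 'M[R]_(m, n)) : 'M[R]_(m, n) := map2_mx (fun a b => a * b) A B.
Definition nzmask (T : 'M[R]_(m, n)) : 'M[R]_(m, n) := \matrix_(i, j) (if T i j != 0 then 1 else 0).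
Definition ones : 'M[R]_(m, n) := const_mx 1.
Definition dinf (a : 'M[R]_(m, n)) (B : set 'M[R]_(m, n)) : R :=
  inf [set linf (a - b) | b in B].
End MatrixNorms.

Section Problem.
Variables (R : realType) (m n d : nat) (Rad : R)
  (x : 'M[R]_(m, n)) (G : 'rV[R]_d -> 'M[R]_(m, n)).

Definition box : set 'rV[R]_d := [set z | forall i, `|z ord0 i| <= Rad].

Definition obj (lam : R) (z : 'rV[R]_d) (M : 'M[R]_(m, n)) : R :=
  l2sq (hadamard (ones R m n - M) x - hadamard (ones R m n - M) (G z)) + lam * l1 M.

Definition optimal (lam : R) (z : 'rV[R]_d) (M : 'M[R]_(m, n)) : Prop :=
  box z /\ forall z' M', box z' -> obj lam z M <= obj lam z' M'.

(* Ztilde = {z in S^d : ||x - G z||_0 = ntilde}, ntilde = min_{z in S^d} ||x - G z||_0 *)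
Definition Ztilde : set 'rV[R]_d :=
  [set z | box z /\ forall z', box z' -> (l0 (x - G z) <= l0 (x - G z'))%N].

Definition Mtilde : set 'M[R]_(m, n) := [set nzmask (x - G z) | z in Ztilde].
End Problem.

(* Main.v *)
Require Import Defs.
From HB Require Import structures.
From mathcomp Require Import all_boot all_order all_algebra.
From mathcomp Require Import all_classical all_reals all_analysis.
From mathcomp Require Import ring lra.
Import Order.TTheory GRing.Theory Num.Theory.
Import numFieldNormedType.Exports.
Local Open Scope classical_set_scope.
Local Open Scope ring_scope.

Section Entry.
Variable R : realType.
Definition phi (lam t r : R) := ((1 - t) * r) ^+ 2 + lam * `|t|.

Lemma phi_ge0 lam t r : 0 <= lam -> 0 <= phi lam t r.
Proof. move=> h; rewrite /phi; apply: addr_ge0; [exact: sqr_ge0| exact: mulr_ge0]. Qed.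

Lemma phi_lb lam t r : 0 < lam -> 
  4 * r ^+ 2 * phi lam t r >= 4 * r^+2 * lam - lam ^+ 2.
Proof.
move=> l0; rewrite /phi.
rewrite exprMn; set a := r ^+ 2.
have ht : 0 <= `|t| - t by rewrite subr_ge0; exact: ler_norm.
have h1 : 0 <= (2 * a * (1 - t) - lam)^+2 by exact: sqr_ge0.
have : 0 <= a by exact: sqr_ge0.
move=> a0; have h2 := mulr_ge0 a0 ht.
have h3 := mulr_ge0 (mulr_ge0 a0 (ltW l0)) ht.
nra.
Qed.

Lemma F1 lam t0 r : 0 < lam -> (forall s, phi lam t0 r <= phi lam s r) ->
  t0 != 0 -> lam / 2 <= phi lam t0 r.
Proof.
move=> l0 opt t0n.
have a0 : 0 <= r^+2 by exact: sqr_ge0.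
have h0 := opt 0.
have ha : lam < 2 * r^+2.
  rewrite ltNge; apply/negP => hle.
  move: h0; rewrite /phi subr0 mul1r normr0 mulr0 addr0.
  have tp : 0 < `|t0| by rewrite normr_gt0.
  have ht : - `|t0| <= t0 by rewrite lerNl; rewrite -normrN; exact: ler_norm.
  have ht2 : t0 <= `|t0| by exact: ler_norm.
  have tt : t0 ^+ 2 = `|t0| ^+ 2 by rewrite real_normK ?num_real.
  rewrite exprMn; set a := r ^+ 2 in a0 hle *.
  have k1 : 0 <= a * (`|t0| - t0) by apply: mulr_ge0 => //; rewrite subr_ge0.
  have k2 : 0 < a * `|t0| + lam - 2 * a.
    have [az|an] := eqVneq a 0.
      by rewrite az; lra.
    have ap : 0 < a by rewrite lt_def an.
    have := mulr_gt0 ap tp; lra.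
  have k3 := mulr_gt0 tp k2.
  have e : ((1 - t0) ^+ 2 * a) = a - 2 * a * t0 + a * `|t0| ^+ 2 by rewrite -tt; ring.
  rewrite e; nra.
have := phi_lb lam t0 r l0.
have := phi_ge0 lam t0 r (ltW l0).
nra.
Qed.

Lemma F2 lam t0 r e : 0 < lam -> 0 < e -> lam <= e ^+ 2 -> e ^+ 2 <= r ^+ 2 ->
  (forall s, phi lam t0 r <= phi lam s r) ->
  t0 = 1 - lam / (2 * r ^+ 2) /\ lam - lam ^+ 2 / (4 * e ^+ 2) <= phi lam t0 r.
Proof.
move=> l0 e0 le hr opt.
have a0 : 0 < r ^+ 2 by apply: lt_le_trans hr; exact: exprn_gt0.
set a := r ^+ 2 in a0 hr *.
set q := lam / (2 * a).
have qa : q * (2 * a) = lam by rewrite /q mulfVK // mulf_neq0 // ?gt_eqF.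
have q0 : 0 < q by rewrite /q divr_gt0 // mulr_gt0.
have q1 : q <= 1 / 2 by nra.
have E : phi lam (1 - q) r = lam - lam * q / 2.
  rewrite /phi ger0_norm; last by lra.
  rewrite (_ : 1 - (1 - q) = q); last by ring.
  rewrite exprMn -/a; nra.
have := opt (1 - q).
rewrite E /phi => h.
have ht : t0 <= `|t0| by exact: ler_norm.
have hu : (1 - t0 - q) ^+ 2 = 0.
  apply/eqP; rewrite eq_le sqr_ge0 andbT.
  have : 0 < a by [].
  rewrite exprMn -/a in h.
  nra.
move/eqP: hu; rewrite sqrf_eq0 => /eqP hu.
have -> : t0 = 1 - q by lra.
split=> //.
rewrite -/(phi lam (1 - q) r) E.
have : lam * q / 2 <= lam ^+ 2 / (4 * e ^+ 2).
  have -> : lam * q / 2 = lam ^+ 2 / (4 * a).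
    rewrite /q; field; by rewrite gt_eqF.
  apply: ler_wpM2l; first exact: sqr_ge0.
  rewrite lef_pV2 ?posrE; first by rewrite ler_pM2l.
    by rewrite mulr_gt0.
  by rewrite mulr_gt0 // exprn_gt0.
by move=> hh; rewrite lerD2l lerN2.
Qed.
End Entry.
Arguments phi {R}. Arguments phi_ge0 {R}. Arguments phi_lb {R}. Arguments F1 {R}. Arguments F2 {R}.
Section Aux.
Variable R : realType.
Lemma sq_le (e r : R) : 0 < e -> e <= `|r| -> e ^+ 2 <= r ^+ 2.
Proof.
move=> e0 h; rewrite -[r ^+ 2]real_normK ?num_real //.
by rewrite !expr2; apply: ler_pM => //; exact: ltW.
Qed.

Lemma count_aux (lam e s nt b N : R) : 0 < lam -> 0 < e -> 0 <= b -> 0 <= s -> s <= N ->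
  nt <= s -> lam * (N + 1) <= e ^+ 2 ->
  (lam - lam ^+ 2 / (4 * e ^+ 2)) * s + lam / 2 * b <= lam * nt ->
  s < nt + 1 / 2 /\ b < 1 / 2.
Proof.
move=> l0 e0 b0 s0 sN ns hl h.
have e2 : 0 < e ^+ 2 by exact: exprn_gt0.
set q := lam / (4 * e ^+ 2) in h.
have hq : q * (4 * e ^+ 2) = lam by rewrite /q mulfVK // gt_eqF // mulr_gt0.
have q0 : 0 < q by rewrite /q divr_gt0 // mulr_gt0.
have E : lam ^+ 2 / (4 * e ^+ 2) = lam * q by rewrite /q expr2 mulrA.
rewrite E in h.
have hq1 : q * (N + 1) * 4 <= 1.
  have : q * (4 * e ^+ 2) * (N + 1) <= e ^+ 2 by rewrite hq.
  nra.
have h2 : (1 - q) * s + b / 2 <= nt.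
  have : lam * ((1 - q) * s + b / 2) <= lam * nt by lra.
  by rewrite ler_pM2l.
have h3 : q * s <= q * N by rewrite ler_pM2l.
split; nra.
Qed.

Lemma frac_bound (lam e r : R) : 0 < lam -> 0 < e -> lam <= e ^+ 2 -> e <= `|r| ->
  [/\ 0 < lam / (2 * r ^+ 2), lam / (2 * r ^+ 2) <= lam * (1 / (2 * e ^+ 2)) &
      lam * (1 / (2 * e ^+ 2)) <= 1 / 2].
Proof.
move=> l0 e0 le er.
have e2 : 0 < e ^+ 2 by exact: exprn_gt0.
have r2 := sq_le e r e0 er.
have r0 : 0 < r ^+ 2 by exact: lt_le_trans e2 r2.
have k2 : 0 < 2 * e ^+ 2 by rewrite mulr_gt0.
have k3 : 0 < 2 * r ^+ 2 by rewrite mulr_gt0.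
split.
- by rewrite divr_gt0.
- rewrite mul1r; apply: ler_wpM2l; first exact: ltW.
  rewrite lef_pV2 ?posrE //; lra.
- rewrite div1r ler_pdivrMr //; lra.
Qed.
End Aux.
Arguments sq_le {R}. Arguments count_aux {R}. Arguments frac_bound {R}.

Section Key.
Variables (R : realType) (m n d : nat) (Rad : R)
  (x : 'M[R]_(m, n)) (G : 'rV[R]_d -> 'M[R]_(m, n)).
Hypothesis Gc : continuous G.

Lemma box_compact : compact (@box R d Rad).
Proof.
have -> : @box R d Rad = [set v : 'rV[R]_d | forall i, `[- Rad, Rad]%classic (v ord0 i)].
  apply/seteqP; split => v /= h i; have := h i; rewrite /= in_itv /=.
    by rewrite ler_norml.
  by rewrite ler_norml.
apply: (@rV_compact R d (fun=> `[- Rad, Rad]%classic)) => i; exact: segment_compact.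
Qed.

Lemma entry_cvg i j z0 : (fun z => (x - G z) i j) @ z0 --> (x - G z0) i j.
Proof.
apply: (cvg_comp (fun z => x - G z) (fun M : 'M[R]_(m, n) => M i j)).
  exact: cvgB (cvg_cst _) (Gc z0).
exact: coord_continuous.
Qed.

Lemma near_forall2 {T} {F : set_system T} {FF : Filter F} (P : 'I_m -> 'I_n -> T -> Prop) :
  (forall i j, \forall t \near F, P i j t) -> \forall t \near F, forall i j, P i j t.
Proof.
move=> h; apply: (@filter_forall T 'I_m (fun i t => forall j, P i j t)) => i.
exact: (@filter_forall T 'I_n (fun j t => P i j t)).
Qed.

Lemma aux_half (a b c : R) : a <= b + c -> b < a / 2 -> a / 2 < c.
Proof. lra. Qed.

Lemma key : exists2 e : R, 0 < e & forall z, box Rad z ->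
  exists2 zt, box Rad zt & forall i j, `|(x - G z) i j| < e -> (x - G zt) i j = 0.
Proof.
have /compact_near_coveringP cov := box_compact.
have := cov R (0:R)^'+ (fun e z => exists2 zt, box Rad zt & forall i j, `|(x - G z) i j| < e -> (x - G zt) i j = 0) _.
case.
- move=> z0 bz0.
  have A : \forall z' \near z0, forall i j, (x - G z0) i j != 0 ->
      `|(x - G z0) i j| / 2 < `|(x - G z') i j|.
    suff H : forall i j, \forall z' \near z0, (x - G z0) i j != 0 ->
      `|(x - G z0) i j| / 2 < `|(x - G z') i j| by exact: near_forall2 H.
    move=> i j.
    have [->|nz] := eqVneq ((x - G z0) i j) 0; first by near=> z'.
    have hp : 0 < `|(x - G z0) i j| / 2 by apply: divr_gt0; rewrite ?normr_gt0.
    apply: filterS (@cvgr_dist_lt _ _ _ _ (nbhs_filter z0) _ _ (entry_cvg i j z0) _ hp) => z' h2.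
    have := ler_distD ((x - G z') i j) ((x - G z0) i j) 0.
    rewrite !subr0 => h1 _.
    exact: aux_half h1 h2.
  have B : \forall e \near 0^'+, forall i j, (x - G z0) i j != 0 ->
      e <= `|(x - G z0) i j| / 2.
    suff H : forall i j, \forall e \near 0^'+, (x - G z0) i j != 0 ->
      e <= `|(x - G z0) i j| / 2 by exact: near_forall2 H.
    move=> i j.
    have [->|nz] := eqVneq ((x - G z0) i j) 0; first by near=> z'.
    have hp : 0 < `|(x - G z0) i j| / 2 by apply: divr_gt0; rewrite ?normr_gt0.
    near do move=> _; exact: nbhs_right_le.
  near=> z' e.
  have h1 : forall i j, (x - G z0) i j != 0 -> `|(x - G z0) i j| / 2 < `|(x - G z') i j|.
    by exact: (near A z').
  have h2 : forall i j, (x - G z0) i j != 0 -> e <= `|(x - G z0) i j| / 2.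
    by exact: (near B e).
  exists z0 => // i j /= he; apply/eqP/negPn/negP => nz.
  have := h1 i j nz; have := h2 i j nz; move: he.
  set a := `|(x - G z0) i j|; set b := `|(x - G z') i j|; lra.
- move=> e0 /= e0p H.
  have e2 : 0 < e0 / 2 by apply: divr_gt0.
  exists (e0 / 2) => // z bz.
  apply: (H (e0 / 2)) => //.
  rewrite /ball_ /= sub0r normrN gtr0_norm //; lra.
Unshelve. all: try by end_near.
Show.
Qed.

Lemma objE lam z M : obj x G lam z M =
  \sum_(p : 'I_m * 'I_n) phi lam (M p.1 p.2) ((x - G z) p.1 p.2).
Proof.
rewrite /obj /l2sq /l1 !pair_bigA /= mulr_sumr -big_split /=.
apply: eq_bigr => p _; rewrite /phi /hadamard /ones !mxE; ring.
Qed.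

Lemma opt_entry lam z M : optimal Rad x G lam z M ->
  forall p t, phi lam (M p.1 p.2) ((x - G z) p.1 p.2) <= phi lam t ((x - G z) p.1 p.2).
Proof.
move=> [bz opt] p t.
pose M' := \matrix_(i, j) if (i, j) == p then t else M i j.
have := opt z M' bz; rewrite !objE (bigD1 p) //= [X in _ <= X](bigD1 p) //=.
rewrite /M' mxE -surjective_pairing eqxx.
have -> : \sum_(q | q != p) phi lam (M' q.1 q.2) ((x - G z) q.1 q.2) =
  \sum_(q | q != p) phi lam (M q.1 q.2) ((x - G z) q.1 q.2).
  by apply: eq_bigr => q /negPf nq; rewrite /M' mxE -surjective_pairing nq.
by rewrite lerD2r.
Qed.

Lemma sum_if (P : pred ('I_m * 'I_n)) (c : R) :
  \sum_p (if P p then c else 0) = c *+ #|P|.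
Proof.
by rewrite -big_mkcond /= -sumr_const.
Qed.

Lemma l0E (T : 'M[R]_(m, n)) : l0 T = #|[pred p : 'I_m * 'I_n | T p.1 p.2 != 0]|.
Proof.
apply: eq_card => p; rewrite inE /=.
apply/idP/idP.
  by rewrite in_setE.
by move=> h; rewrite in_setE.
Qed.

Lemma mask_obj lam zt : obj x G lam zt (nzmask (x - G zt)) = lam *+ l0 (x - G zt).
Proof.
rewrite objE l0E -sum_if; apply: eq_bigr => p _; rewrite /nzmask mxE.
rewrite /phi /=.
case: ((x - G zt) p.1 p.2 =P 0) => [->|_] /=.
  by rewrite mulr0 expr0n /= normr0 mulr0 addr0.
by rewrite subrr mul0r expr0n /= normr1 mulr1 add0r.
Qed.

Lemma Zt_ex (zs : 'rV[R]_d) : box Rad zs -> exists zt, Ztilde Rad x G zt.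
Proof.
move=> bzs.
have exP : exists k, (fun k => `[< exists z, box Rad z /\ l0 (x - G z) = k >]) k.
  by exists (l0 (x - G zs)); apply/asboolP; exists zs.
case: (ex_minnP exP) => k /asboolP [zt [bzt hk]] hmin.
exists zt; split => // z' bz'; rewrite hk; apply: hmin; apply/asboolP; by exists z'.
Qed.

Lemma nzmaskE (T : 'M[R]_(m, n)) i j : nzmask T i j = if T i j != 0 then 1 else 0.
Proof. by rewrite mxE. Qed.

Lemma main (zs : 'rV[R]_d) : box Rad zs ->
  exists2 lt : R, 0 < lt & exists2 K : R, 0 <= K &
  forall lam, 0 < lam -> lam <= lt -> forall z M, optimal Rad x G lam z M ->
  exists zt, [/\ Ztilde Rad x G zt, nzmask M = nzmask (x - G zt) &
     forall i j, `|M i j - nzmask (x - G zt) i j| <= lam * K].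
Proof.
move=> bzs.
have [e e0 He] := key.
have [zt0 [bzt0 hzt0]] := Zt_ex zs bzs.
set nt := l0 (x - G zt0).
set N := #|{: 'I_m * 'I_n}|.
have N0 : 0 <= N%:R :> R by rewrite ler0n.
have e2 : 0 < e ^+ 2 by exact: exprn_gt0.
exists (e ^+ 2 / (N%:R + 1)); first by apply: divr_gt0 => //; lra.
exists (1 / (2 * e ^+ 2)); first by rewrite ltW // divr_gt0 // mulr_gt0.
move=> lam lp llt z M opt.
have llt' : lam * (N%:R + 1) <= e ^+ 2 by rewrite -ler_pdivlMr //; lra.
have lle : lam <= e ^+ 2.
  apply: le_trans llt'; rewrite -{1}(mulr1 lam) ler_pM2l //; lra.
have hopt := opt_entry lam z M opt.
have [zt bzt hzt] := He z opt.1.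
pose S := [pred p : 'I_m * 'I_n | e <= `|(x - G z) p.1 p.2|].
pose B := [pred p : 'I_m * 'I_n | (M p.1 p.2 != 0) && (`|(x - G z) p.1 p.2| < e)].
pose A := [pred p : 'I_m * 'I_n | (x - G zt) p.1 p.2 != 0].
have up : obj x G lam z M <= lam *+ nt.
  by have := opt.2 zt0 (nzmask (x - G zt0)) bzt0; rewrite mask_obj.
have lo : (lam - lam ^+ 2 / (4 * e ^+ 2)) *+ #|S| + (lam / 2) *+ #|B| <= obj x G lam z M.
  rewrite objE -!sum_if -big_split /=; apply: ler_sum => p _.
  have hp := hopt p.
  case hS : (e <= `|(x - G z) p.1 p.2|) => /=.
    have hB : ((M p.1 p.2 != 0) && (`|(x - G z) p.1 p.2| < e)) = false.
      by apply/negbTE; rewrite negb_and -leNgt hS orbT.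
    rewrite hB addr0.
    have [_ ->] := F2 _ _ _ _ lp e0 lle (sq_le _ _ e0 hS) hp.
    done.
  rewrite add0r.
  case: ifP => [/andP[hM _]|_].
    exact: F1 _ _ _ lp hp hM.
  exact: phi_ge0 _ _ _ (ltW lp).
have AS : A \subset S.
  apply/fintype.subsetP => p; rewrite !inE; apply: contraR; rewrite -ltNge => h.
  by apply/eqP; apply: hzt.
have ntA : (nt <= #|A|)%N by have := hzt0 zt bzt; rewrite [l0 (x - G zt)]l0E.
have AS' := subset_leq_card AS.
have := le_trans lo up.
rewrite -(mulr_natr _ #|S|) -(mulr_natr _ #|B|) -(mulr_natr lam nt) => hh.
have sN : #|S|%:R <= N%:R :> R by rewrite ler_nat; exact: max_card.
have ns : nt%:R <= #|S|%:R :> R by rewrite ler_nat; exact: leq_trans ntA AS'.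
have [c1 c2] := count_aux lam e #|S|%:R nt%:R #|B|%:R N%:R lp e0 (ler0n _ _) (ler0n _ _) sN ns llt' hh.
have hSn : #|S| = nt.
  apply/eqP; rewrite eqn_leq; apply/andP; split; last by rewrite -(ler_nat R).
  rewrite leqNgt; apply/negP => h.
  have : (nt.+1)%:R <= #|S|%:R :> R by rewrite ler_nat.
  rewrite -natr1; lra.
have hB0 : #|B| = 0%N.
  apply/eqP; rewrite -leqn0 leqNgt; apply/negP => h.
  have : 1%:R <= #|B|%:R :> R by rewrite ler_nat.
  lra.
have cA : #|A| = nt by apply/eqP; rewrite eqn_leq ntA -hSn AS'.
have hAS : A =i S by apply/(subset_cardP _); rewrite ?cA ?hSn.
have hBp := card0_eq hB0.
have entry : forall i j, e <= `|(x - G z) i j| ->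
    M i j = 1 - lam / (2 * ((x - G z) i j) ^+ 2) /\ (x - G zt) i j != 0.
  move=> i j hS; split; last by have := hAS (i, j); rewrite !inE /= hS.
  by have [-> _] := F2 _ _ _ _ lp e0 lle (sq_le _ _ e0 hS) (hopt (i, j)).
have entry' : forall i j, ~~ (e <= `|(x - G z) i j|) ->
    M i j = 0 /\ (x - G zt) i j = 0.
  move=> i j hS; split.
    have := hBp (i, j); rewrite !inE /= -ltNge in hS *; rewrite hS andbT.
    by move/negbT/negPn/eqP.
  have := hAS (i, j); rewrite !inE /= (negbTE hS).
  by move/negbT/negPn/eqP.
exists zt; split.
- split => // z' bz'; rewrite l0E.
  change (#|A| <= l0 (x - G z'))%N; rewrite cA; exact: hzt0.
- apply/matrixP => i j; rewrite !nzmaskE.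
  case: (boolP (e <= `|(x - G z) i j|)) => hS.
    have [-> ->] := entry i j hS.
    have [k1 _ k3] := frac_bound lam e _ lp e0 lle hS.
    rewrite ifT //; apply/eqP => h0.
    have [k1' k2' _] := frac_bound lam e _ lp e0 lle hS.
    lra.
  by have [-> ->] := entry' i j hS; rewrite eqxx.
- move=> i j; rewrite !nzmaskE.
  case: (boolP (e <= `|(x - G z) i j|)) => hS.
    have [-> hz] := entry i j hS; rewrite hz.
    have [k1 k2 _] := frac_bound lam e _ lp e0 lle hS.
    rewrite (_ : 1 - _ - 1 = - (lam / (2 * ((x - G z) i j) ^+ 2))); last by ring.
    by rewrite normrN gtr0_norm.
  have [-> ->] := entry' i j hS; rewrite eqxx subrr normr0.
  by rewrite mulr_ge0 ?ltW // divr_gt0 // mulr_gt0.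
Qed.

Lemma subE (A B : 'M[R]_(m, n)) i j : (A - B) i j = A i j - B i j.
Proof. by rewrite !mxE. Qed.

Lemma linf_ge0 (A : 'M[R]_(m, n)) : 0 <= linf A.
Proof.
rewrite /linf; elim/big_ind: _ => //; first by move=> a b ha hb; rewrite le_max ha.
move=> i _; elim/big_ind: _ => //; try by move=> a b ha hb; rewrite le_max ha.
Qed.

Lemma linf_le (A : 'M[R]_(m, n)) c : 0 <= c -> (forall i j, `|A i j| <= c) -> linf A <= c.
Proof.
move=> c0 h; rewrite /linf; apply: bigmax_le => // i _.
by apply: bigmax_le => // j _.
Qed.

End Key.

Theorem theorem2 (R : realType) (m n d n0 : nat) (Rad : R)
  (x : 'M[R]_(m, n)) (G : 'rV[R]_d -> 'M[R]_(m, n)) (zstar : 'rV[R]_d) :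
  (0 < m)%N -> (0 < n)%N -> (0 < d)%N -> (0 < n0)%N -> 0 < Rad ->
  continuous G ->
  box Rad zstar -> (l0 (x - G zstar) <= n0)%N ->
  (* d_oo(Mhat(lambda), Mtilde) -> 0 as lambda -> 0+, for any selection of optimal M *)
  (forall Mhat : R -> 'M[R]_(m, n),
      (forall lam, 0 < lam -> exists z, optimal Rad x G lam z (Mhat lam)) ->
      (fun lam => dinf (Mhat lam) (Mtilde Rad x G)) @ 0^'+ --> 0) /\
  (exists lamt : R, 0 < lamt /\
     (forall lam, 0 < lam -> lam <= lamt -> forall z M, optimal Rad x G lam z M ->
        exists2 Mt, Mtilde Rad x G Mt & Mt = nzmask M) /\
     (Ztilde Rad x G = [set zstar] ->
      forall lam, 0 < lam -> lam <= lamt -> forall z M, optimal Rad x G lam z M ->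
        nzmask M = nzmask (x - G zstar))) /\
  (Ztilde Rad x G = [set zstar] ->
   forall Mhat : R -> 'M[R]_(m, n),
      (forall lam, 0 < lam -> exists z, optimal Rad x G lam z (Mhat lam)) ->
      Mhat @ 0^'+ --> nzmask (x - G zstar)).
Proof.
move=> m0 n0' d0 n00 R0 Gc bz hn.
have [lt lt0 [K K0 Hm]] := @main R m n d Rad x G Gc zstar bz.
have K1 : 0 < K + 1 by lra.
split; [|split].
- move=> Mhat hM; apply/cvgrPdist_lt => eps eps0.
  have ep : 0 < eps / (K + 1) by rewrite divr_gt0.
  near=> lam.
  have lp : 0 < lam by near: lam; exact: nbhs_right_gt.
  have llt : lam <= lt by near: lam; exact: nbhs_right_le.
  have leps : lam < eps / (K + 1) by near: lam; exact: nbhs_right_lt.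
  have lK : lam * K < eps.
    rewrite ltr_pdivlMr // in leps.
    have : lam * K <= lam * (K + 1) by rewrite ler_pM2l //; lra.
    lra.
  have [z opt] := hM lam lp.
  have [zt [Zt _ hb]] := Hm lam lp llt z _ opt.
  rewrite sub0r normrN.
  have hlb : has_lbound [set linf (Mhat lam - b) | b in Mtilde Rad x G].
    by exists 0 => y [b _ <-]; exact: linf_ge0.
  have mem : [set linf (Mhat lam - b) | b in Mtilde Rad x G]
      (linf (Mhat lam - nzmask (x - G zt))).
    by exists (nzmask (x - G zt)) => //; exists zt.
  have h1 : dinf (Mhat lam) (Mtilde Rad x G) <= linf (Mhat lam - nzmask (x - G zt)).
    exact: ge_inf hlb _ mem.
  have h2 : 0 <= dinf (Mhat lam) (Mtilde Rad x G).
    apply: lb_le_inf; first by exists (linf (Mhat lam - nzmask (x - G zt))).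
    by move=> y [b _ <-]; exact: linf_ge0.
  have h3 : linf (Mhat lam - nzmask (x - G zt)) <= lam * K.
    apply: linf_le; first by rewrite mulr_ge0 // ltW.
    by move=> i j; rewrite subE; exact: hb.
  rewrite ger0_norm //; lra.
- exists lt; split => //; split.
  + move=> lam lp llt z M opt.
    have [zt [Zt hm _]] := Hm lam lp llt z M opt.
    by exists (nzmask (x - G zt)) => //; exists zt.
  + move=> HZ lam lp llt z M opt.
    have [zt [Zt hm _]] := Hm lam lp llt z M opt.
    by move: Zt; rewrite HZ => <-.
- move=> HZ Mhat hM; apply/cvgrPdist_lt => eps eps0.
  have ep : 0 < eps / (K + 1) by rewrite divr_gt0.
  near=> lam.
  have lp : 0 < lam by near: lam; exact: nbhs_right_gt.
  have llt : lam <= lt by near: lam; exact: nbhs_right_le.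
  have leps : lam < eps / (K + 1) by near: lam; exact: nbhs_right_lt.
  have lK : lam * K < eps.
    rewrite ltr_pdivlMr // in leps.
    have : lam * K <= lam * (K + 1) by rewrite ler_pM2l //; lra.
    lra.
  have [z opt] := hM lam lp.
  have [zt [Zt _ hb]] := Hm lam lp llt z _ opt.
  move: Zt hb; rewrite HZ => -> hb.
  apply: le_lt_trans lK.
  rewrite [leLHS]/Num.norm /= mx_normrE.
  apply: bigmax_le => [|p _]; first by rewrite mulr_ge0 // ltW.
  by rewrite subE distrC; exact: hb.
Unshelve. all: by end_near.
Qed.
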